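(* For every generator $(v_0,v_1,v_2,v_3)$ of $C_3^{h\neq}(V)$ one has $$\nu\big(\widehat\sigma(v_0,v_1,v_2,v_3)\big)=\mu\big(\partial(v_0,v_1,v_2,v_3)\big)\quad\text{in } \mathbb C\wedge_{\mathbb Z}\mathbb C,$$ where $\mu$ is extended linearly. Consequently, $\widehat\sigma$ maps the $3$-cycles of $C_*^{h\neq}(V)_G$ into $\ker\nu$. Given that $\widehat\sigma$ kills boundaries in $\widehat{\mathcal P}(\mathbb C)$, it therefore induces a homomorphism $H_3^{h\neq}(V)\to\widehat{\mathcal B}(\mathbb C)$.
   Context: Let $V=(\mathbb C^2\setminus\{0\})/\pm$, let $G=\mathrm{PSL}(2,\mathbb C)$ act on $V$ on the left by matrix multiplication, and let $h:V\to\mathbb CP^1$ be $h(\pm(\alpha,\beta)^T)=\alpha/\beta$. For $n\ge 0$ let $C_n(V)$ be the free abelian group on $(n+1)$-tuples of elements of $V$, with boundary $\partial(v_0,\dots,v_n)=\sum_{i=0}^n(-1)^i(v_0,\dots,\widehat{v_i},\dots,v_n)$ and the diagonal left $G$-action. Let $C_n^{h\neq}(V)$ be the subcomplex spanned by tuples whose $h(v_i)$ are pairwise distinct. Let $C_n^{h\neq}(V)_G=\mathbb Z\otimes_{\mathbb Z[G]}C_n^{h\neq}(V)$, and let $H_n^{h\neq}(V)$ denote its homology. For $v_i,v_j\in V$ with $h(v_i)\ne h(v_j)$, $\det(v_i,v_j)$ denotes the determinant of the $2\times2$ matrix whose columns are representatives of $v_i,v_j$. It is nonzero and defined up to sign;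 fix the sign by requiring $0\le\arg\det(v_i,v_j)<\pi$. Put $c_{ij}=\mathrm{Log}\det(v_i,v_j)$ (principal branch). This is invariant under $G$. Define $\widehat\sigma(v_0,v_1,v_2,v_3)=(w_0,w_1,w_2)$, where - $w_0=c_{03}+c_{12}-c_{02}-c_{13}$, - $w_1=c_{02}+c_{13}-c_{01}-c_{23}$, - $w_2=c_{01}+c_{23}-c_{03}-c_{12}$. This triple is a combinatorial flattening of the cross ratio $z=[h(v_0):h(v_1):h(v_2):h(v_3)]$, where $[a:b:c:d]=\frac{(a-d)(b-c)}{(b-d)(a-c)}$. It defines a map $C_3^{h\neq}(V)_G\to\widehat{\mathcal P}(\mathbb C)$. Here $\widehat{\mathcal P}(\mathbb C)$ is Neumann's extended pre-Bloch group. It is the free abelian group on combinatorial flattenings $[z;p,q]=(w_0,w_1,w_2)$, where $z\in\mathbb C\setminus\{0,1\}$, $p,q\in\mathbb Z$, $w_0=\mathrm{Log}z+p\pi i$, $w_1=-\mathrm{Log}(1-z)+q\pi i$, and $w_0+w_1+w_2=0$, taken modulo Neumann's lifted five-term relations. The map $\nu:\widehat{\mathcal P}(\mathbb C)\to\mathbb C\wedge_{\mathbb Z}\mathbb C$ is $\nu(w_0,w_1,w_2)=w_0\wedge w_1$, and $\widehat{\mathcal B}(\mathbb C)=\ker\nu$. Define $\mu:C_2^{h\neq}(V)_G\to\mathbb C\wedge_{\mathbb Z}\mathbb C$ by $\mu(v_0,v_1,v_2)=c_{01}\wedge c_{02}-c_{01}\wedge c_{12}+c_{02}\wedge c_{12}$.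 *)

(* Defs.v *)
From Stdlib Require Import Reals.
From HB Require Import structures.
From mathcomp Require Import all_boot all_algebra.
Set Implicit Arguments. Unset Strict Implicit. Unset Printing Implicit Defensive.

Record cpx := mkC { cRe : R; cIm : R }.

Definition cadd (z w : cpx) : cpx := mkC (Rplus (cRe z) (cRe w)) (Rplus (cIm z) (cIm w)).
Definition copp (z : cpx) : cpx := mkC (Ropp (cRe z)) (Ropp (cIm z)).
Definition csub (z w : cpx) : cpx := cadd z (copp w).
Definition cmul (z w : cpx) : cpx :=
  mkC (Rminus (Rmult (cRe z) (cRe w)) (Rmult (cIm z) (cIm w)))
      (Rplus (Rmult (cRe z) (cIm w)) (Rmult (cIm z) (cRe w))).
Definition czero : cpx := mkC R0 R0.
Definition cone : cpx := mkC R1 R0.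

(* principal argument, with values in (-PI, PI] *)
Definition Arg (z : cpx) : R :=
  let x := cRe z in let y := cIm z in
  if Rlt_dec R0 x then atan (Rdiv y x)
  else if Rlt_dec x R0 then
    (if Rle_dec R0 y then Rplus (atan (Rdiv y x)) PI
     else Rminus (atan (Rdiv y x)) PI)
  else if Rlt_dec R0 y then Rdiv PI (Rplus R1 R1)
  else if Rlt_dec y R0 then Ropp (Rdiv PI (Rplus R1 R1))
  else R0.

Definition cLog (z : cpx) : cpx :=
  mkC (ln (sqrt (Rplus (Rsqr (cRe z)) (Rsqr (cIm z))))) (Arg z).

(* ---------- V = (C^2 \ 0)/± , represented by representatives ---------- *)
Definition CV := (cpx * cpx)%type.

Definition vnonzero (v : CV) : Prop := v <> (czero, czero).

(* h(v) <> h(w) in CP^1, for nonzero v, w : alpha_v/beta_v <> alpha_w/beta_w *)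
Definition hdistinct (v w : CV) : Prop := cmul v.1 w.2 <> cmul w.1 v.2.

Definition det (v w : CV) : cpx := csub (cmul v.1 w.2) (cmul w.1 v.2).

(* sign normalisation: the one of +-z with 0 <= arg < PI *)
Definition normsign (z : cpx) : cpx :=
  if Rle_dec R0 (Arg z) then (if Rlt_dec (Arg z) PI then z else copp z)
  else copp z.

Definition cc (v w : CV) : cpx := cLog (normsign (det v w)).

Definition gen4 (v0 v1 v2 v3 : CV) : Prop :=
  [/\ vnonzero v0, vnonzero v1, vnonzero v2 & vnonzero v3] /\
  [/\ hdistinct v0 v1, hdistinct v0 v2, hdistinct v0 v3 & hdistinct v1 v2] /\
  (hdistinct v1 v3 /\ hdistinct v2 v3).

(* formal Z-combinations of wedges a /\ b *)
Definition wform := seq (int * (cpx * cpx)).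

Definition alt_biadd (B : zmodType) (f : cpx -> cpx -> B) : Prop :=
  [/\ (forall x y z, f (cadd x y) z = (f x z + f y z)%R),
      (forall x y z, f x (cadd y z) = (f x y + f x z)%R)
    & (forall x, f x x = 0%R)].

Definition wedge_eval (B : zmodType) (f : cpx -> cpx -> B) (s : wform) : B :=
  (\sum_(p <- s) f p.2.1 p.2.2 *~ p.1)%R.

(* equality in the exterior square C /\_Z C, via its universal property:
   two formal combinations are equal iff every alternating Z-bilinear map
   into an abelian group takes the same value on them. *)
Definition weq (s t : wform) : Prop :=
  forall (B : zmodType) (f : cpx -> cpx -> B),
    alt_biadd f -> wedge_eval f s = wedge_eval f t.

Definition wscale (k : int) (s : wform) : wform :=
  map (fun p => ((k * p.1)%R, p.2)) s.

Definition sigma_hat (v0 v1 v2 v3 : CV) : cpx * cpx * cpx :=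
  let c01 := cc v0 v1 in let c02 := cc v0 v2 in let c03 := cc v0 v3 in
  let c12 := cc v1 v2 in let c13 := cc v1 v3 in let c23 := cc v2 v3 in
  (csub (cadd c03 c12) (cadd c02 c13),
   csub (cadd c02 c13) (cadd c01 c23),
   csub (cadd c01 c23) (cadd c03 c12)).

Definition nu (w : cpx * cpx * cpx) : wform := [:: (1%R, (w.1.1, w.1.2))].

Definition mu (v0 v1 v2 : CV) : wform :=
  [:: (1%R, (cc v0 v1, cc v0 v2));
      ((-1)%R, (cc v0 v1, cc v1 v2));
      (1%R, (cc v0 v2, cc v1 v2))].

Definition mu_bd (v0 v1 v2 v3 : CV) : wform :=
  wscale 1 (mu v1 v2 v3) ++ wscale (-1) (mu v0 v2 v3)
  ++ wscale 1 (mu v0 v1 v3) ++ wscale (-1) (mu v0 v1 v2).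

Definition tuple3 := (CV * CV * CV)%type.
Definition tuple4 := (CV * CV * CV * CV)%type.

Definition gen4t (t : tuple4) : Prop :=
  let '(v0, v1, v2, v3) := t in gen4 v0 v1 v2 v3.

(* 3-chain: finite Z-combination of generators *)
Definition chain3 := seq (int * tuple4).

Definition faces (t : tuple4) : seq (int * tuple3) :=
  let '(v0, v1, v2, v3) := t in
  [:: (1%R, (v1, v2, v3)); ((-1)%R, (v0, v2, v3));
      (1%R, (v0, v1, v3)); ((-1)%R, (v0, v1, v2))].

Definition bd (ch : chain3) : seq (int * tuple3) :=
  flatten (map (fun p => map (fun q => ((p.1 * q.1)%R, q.2)) (faces p.2)) ch).

Definition mact (a b c d : cpx) (v : CV) : CV :=
  (cadd (cmul a v.1) (cmul b v.2), cadd (cmul c v.1) (cmul d v.2)).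

Definition Veq (v w : CV) : Prop := v = w \/ v = (copp w.1, copp w.2).

(* t and t' lie in the same orbit of G = PSL(2,C) acting diagonally on V^3 *)
Definition Gequiv (t t' : tuple3) : Prop :=
  let '(v0, v1, v2) := t in let '(w0, w1, w2) := t' in
  exists a b c d : cpx, csub (cmul a d) (cmul b c) = cone /\
    [/\ Veq (mact a b c d v0) w0, Veq (mact a b c d v1) w1
      & Veq (mact a b c d v2) w2].

(* a 2-chain is zero in the coinvariants Z (x)_{Z[G]} C_2^{h<>}(V), i.e. it is
   killed by every G-invariant Z-valued (or abelian-group-valued) function *)
Definition zero_coinv (s : seq (int * tuple3)) : Prop :=
  forall (B : zmodType) (phi : tuple3 -> B),
    (forall t t', Gequiv t t' -> phi t = phi t') ->
    (\sum_(p <- s) phi p.2 *~ p.1)%R = 0%R.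

Definition nu_sigma_chain (ch : chain3) : wform :=
  flatten (map (fun p => let '(v0, v1, v2, v3) := p.2 in
                         wscale p.1 (nu (sigma_hat v0 v1 v2 v3))) ch).

(* Main.v *)
Require Import Defs.
From Stdlib Require Import Reals Lra.
From mathcomp Require Import all_boot all_algebra.
Open Scope R_scope.

Lemma div_nonneg_iff x y : 0 < x -> (0 <= y / x <-> 0 <= y).
Proof.
  intro Hx. assert (Hi : 0 < / x) by (apply Rinv_0_lt_compat; lra).
  unfold Rdiv. split; intro H.
  - replace y with ((y * / x) * x) by (field; lra). apply Rmult_le_pos; lra.
  - apply Rmult_le_pos; lra.
Qed.


Lemma div_neg_lt x y : x < 0 -> 0 < y -> y / x < 0.
Proof. intros Hx Hy. unfold Rdiv.
  assert (Hi : / x < 0) by (apply Rinv_lt_0_compat; lra). nra. Qed.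

Lemma atan_lt0 u : u < 0 -> atan u < 0.
Proof. intro H. rewrite <- atan_0. apply atan_increasing. exact H. Qed.
Lemma atan_le0 u : u <= 0 -> atan u <= 0.
Proof. intro H. destruct (Req_dec u 0) as [->|]. rewrite atan_0; lra.
  left. apply atan_lt0; lra. Qed.
Lemma atan_ge0 u : 0 <= u -> 0 <= atan u.
Proof. intro H. destruct (Req_dec u 0) as [->|]. rewrite atan_0; lra.
  left. rewrite <- atan_0. apply atan_increasing; lra. Qed.

Definition Pin (z : cpx) := 0 <= Arg z /\ Arg z < PI.

Lemma Pin_char z : ~ (cRe z = 0 /\ cIm z = 0) ->
  (Pin z <-> (0 < cIm z \/ (cIm z = 0 /\ 0 < cRe z))).
Proof.
  destruct z as [x y]; simpl. intro Hnz. unfold Pin, Arg; simpl.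
  pose proof PI_RGT_0. pose proof (atan_bound (y / x)).
  destruct (Rlt_dec R0 x) as [Hx|Hx]; cbn [is_left].
  - pose proof (div_nonneg_iff x y Hx) as Hd. split.
    + intros [H1 H2]. assert (0 <= y).
      { apply Hd. destruct (Rle_dec 0 (y/x)) as [|Hn]; [assumption|].
        pose proof (atan_lt0 (y/x) (Rnot_le_lt _ _ Hn)). lra. }
      destruct (Req_dec y 0); [right|left]; lra.
    + intros H3. split; [|lra]. apply atan_ge0. apply Hd. lra.
  - destruct (Rlt_dec x R0) as [Hx'|Hx']; cbn [is_left].
    + destruct (Rle_dec R0 y) as [Hy|Hy]; cbn [is_left].
      * split.
        -- intros [_ H2]. destruct (Req_dec y 0) as [->|Hy0]; [|left; lra].
           exfalso. replace (0 / x) with 0 in H2 by (unfold Rdiv; ring).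
           rewrite atan_0 in H2. lra.
        -- intros [H3|[H3 H4]]; [|lra].
           pose proof (atan_lt0 _ (div_neg_lt x y Hx' H3)). split; lra.
      * assert (0 < y / x).
        { unfold Rdiv. assert (/ x < 0) by (apply Rinv_lt_0_compat; lra). nra. }
        split; intros; lra.
    + assert (x = 0) by lra. subst x.
      destruct (Rlt_dec R0 y); cbn [is_left].
      * split; intros; [left; lra|]. split; lra.
      * destruct (Rlt_dec y R0); cbn [is_left]. split; intros; lra. exfalso; apply Hnz; lra.
Qed.


Lemma ns_in z : Pin z -> normsign z = z.
Proof. intros [H1 H2]. unfold normsign.
  destruct (Rle_dec R0 (Arg z)); [|lra]. destruct (Rlt_dec (Arg z) PI); [reflexivity|lra]. Qed.

Lemma ns_out z : ~ Pin z -> normsign z = copp z.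
Proof. intros H. unfold normsign, Pin in *.
  destruct (Rle_dec R0 (Arg z)); [|reflexivity]. destruct (Rlt_dec (Arg z) PI); [|reflexivity].
  exfalso; apply H; split; assumption. Qed.

Lemma copp_inv z : copp (copp z) = z.
Proof. destruct z; unfold copp; simpl; f_equal; ring. Qed.

Lemma normsign_opp z : normsign (copp z) = normsign z.
Proof.
  destruct (Req_dec (cRe z) 0) as [Hx|Hx]; [destruct (Req_dec (cIm z) 0) as [Hy|Hy]|].
  - destruct z as [x y]; simpl in *; subst. unfold copp; simpl. rewrite Ropp_0. reflexivity.
  - assert (Hz : ~ (cRe z = 0 /\ cIm z = 0)) by tauto.
    assert (Hz' : ~ (cRe (copp z) = 0 /\ cIm (copp z) = 0)) by (simpl; lra).
    pose proof (Pin_char z Hz) as C1. pose proof (Pin_char (copp z) Hz') as C2. simpl in C2.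
    destruct (Rlt_dec 0 (cIm z)).
    + rewrite (ns_in z); [|apply C1; auto]. rewrite ns_out; [apply copp_inv|].
      intro P; apply C2 in P; lra.
    + rewrite (ns_out z); [rewrite ns_in; [reflexivity|apply C2; lra]|].
      intro P; apply C1 in P; lra.
  - assert (Hz : ~ (cRe z = 0 /\ cIm z = 0)) by tauto.
    assert (Hz' : ~ (cRe (copp z) = 0 /\ cIm (copp z) = 0)) by (simpl; lra).
    pose proof (Pin_char z Hz) as C1. pose proof (Pin_char (copp z) Hz') as C2. simpl in C2.
    destruct (Rlt_dec 0 (cIm z)); [|destruct (Rlt_dec (cIm z) 0)].
    + rewrite (ns_in z); [|apply C1; auto]. rewrite ns_out; [apply copp_inv|].
      intro P; apply C2 in P; lra.
    + rewrite (ns_out z); [rewrite ns_in; [reflexivity|apply C2; lra]|].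
      intro P; apply C1 in P; lra.
    + assert (cIm z = 0) by lra.
      destruct (Rlt_dec 0 (cRe z)).
      * rewrite (ns_in z); [|apply C1; auto]. rewrite ns_out; [apply copp_inv|].
        intro P; apply C2 in P; lra.
      * rewrite (ns_out z); [rewrite ns_in; [reflexivity|apply C2; lra]|].
        intro P; apply C1 in P; lra.
Qed.

Lemma det_mact a b c d v u : csub (cmul a d) (cmul b c) = cone ->
  det (mact a b c d v) (mact a b c d u) = det v u.
Proof.
  intro H. transitivity (cmul (csub (cmul a d) (cmul b c)) (det v u)).
  - destruct a, b, c, d, v as [[] []], u as [[] []].
    unfold det, mact, cmul, csub, cadd, copp; simpl; f_equal; ring.
  - rewrite H. destruct (det v u). unfold cmul, cone; simpl; f_equal; ring.
Qed.

Lemma det_oppl v u : det (copp v.1, copp v.2) u = copp (det v u).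
Proof. destruct v as [[] []], u as [[] []].
  unfold det, cmul, csub, cadd, copp; simpl; f_equal; ring. Qed.
Lemma det_oppr v u : det v (copp u.1, copp u.2) = copp (det v u).
Proof. destruct v as [[] []], u as [[] []].
  unfold det, cmul, csub, cadd, copp; simpl; f_equal; ring. Qed.

Lemma cc_inv a b c d v u w w' : csub (cmul a d) (cmul b c) = cone ->
  Veq (mact a b c d v) w -> Veq (mact a b c d u) w' -> cc v u = cc w w'.
Proof.
  intros H H1 H2. unfold cc. f_equal.
  assert (E : normsign (det (mact a b c d v) (mact a b c d u)) = normsign (det w w')).
  { destruct H1 as [H1|H1]; destruct H2 as [H2|H2]; rewrite H1 H2;
    rewrite ?det_oppl ?det_oppr ?normsign_opp; simpl; rewrite ?copp_inv ?normsign_opp;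
    reflexivity. }
  rewrite <- E, det_mact; auto.
Qed.
Close Scope R_scope.
Import GRing.Theory.
Set Implicit Arguments.
Local Open Scope ring_scope.

Section Alt.
Variables (B : zmodType) (f : cpx -> cpx -> B).
Hypothesis Hf : alt_biadd f.

Lemma fDl x y z : f (cadd x y) z = f x z + f y z.
Proof. by case: Hf. Qed.
Lemma fDr x y z : f x (cadd y z) = f x y + f x z.
Proof. by case: Hf. Qed.
Lemma fxx x : f x x = 0.
Proof. by case: Hf. Qed.

Lemma cadd0 : cadd czero czero = czero.
Proof. rewrite /cadd /czero /=; f_equal; apply Rplus_0_l. Qed.
Lemma caddN x : cadd x (copp x) = czero.
Proof. case: x => a b; rewrite /cadd /copp /czero /=; f_equal; apply Rplus_opp_r. Qed.

Lemma f0l y : f czero y = 0.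
Proof. have h : f czero y + f czero y = f czero y + 0 by rewrite addr0 -fDl cadd0.
  exact: addrI h. Qed.
Lemma f0r y : f y czero = 0.
Proof. have h : f y czero + f y czero = f y czero + 0 by rewrite addr0 -fDr cadd0.
  exact: addrI h. Qed.
Lemma fBl x y z : f (csub x y) z = f x z - f y z.
Proof. rewrite /csub fDl; congr (_ + _). apply/eqP; rewrite -(inj_eq (addrI (f y z))).
  by rewrite addrN -fDl caddN f0l. Qed.
Lemma fBr x y z : f x (csub y z) = f x y - f x z.
Proof. rewrite /csub fDr; congr (_ + _). apply/eqP; rewrite -(inj_eq (addrI (f x z))).
  by rewrite addrN -fDr caddN f0r. Qed.
Lemma fC x y : f y x = - f x y.
Proof. apply/eqP; rewrite -(inj_eq (addrI (f x y))) addrN.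
  have := fxx (cadd x y). by rewrite !fDl !fDr !fxx add0r addr0 => ->. Qed.
End Alt.

Lemma part1 v0 v1 v2 v3 : weq (nu (sigma_hat v0 v1 v2 v3)) (mu_bd v0 v1 v2 v3).
Proof.
  move=> B f Hf. rewrite /wedge_eval /nu /sigma_hat /mu_bd /wscale /mu /=.
  rewrite !big_cons big_nil /=.
  set a := cc v0 v1. set b := cc v0 v2. set c := cc v0 v3.
  set d := cc v1 v2. set e := cc v1 v3. set g := cc v2 v3.
  rewrite !(fBl Hf) !(fBr Hf) (fxx Hf (cadd b e)) !(fDl Hf) !(fDr Hf).
  rewrite ?mulr1 ?mul1r ?mulrNN ?mulr1z ?mulrN1z ?addr0 ?subr0.
  rewrite (fC Hf c b) (fC Hf d b) (fC Hf c a) (fC Hf d a) (fC Hf b a) (fC Hf e a).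
  rewrite !opprD !opprK.
  rewrite oppr0 add0r !addrA.
  by rewrite [LHS](ACl (4*8*12*1*10*6*5*11*2*9*7*3)%AC).
Qed.

Lemma wscaleE (B : zmodType) (f : cpx -> cpx -> B) k s :
  wedge_eval f (wscale k s) = wedge_eval f s *~ k.
Proof.
  elim: s => [|p s IH]; first by rewrite /wedge_eval !big_nil mul0rz.
  rewrite /wedge_eval /= !big_cons -/(wedge_eval f s) -/(wedge_eval f (wscale k s)) IH.
  by rewrite mulrzDl (mulrC k) mulrzA.
Qed.

Lemma wcatE (B : zmodType) (f : cpx -> cpx -> B) s t :
  wedge_eval f (s ++ t) = wedge_eval f s + wedge_eval f t.
Proof. by rewrite /wedge_eval big_cat. Qed.

Definition phiw (B : zmodType) (f : cpx -> cpx -> B) (t : tuple3) : B :=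
  let '(v0, v1, v2) := t in wedge_eval f (mu v0 v1 v2).
Arguments phiw {B}.

Lemma chainE (B : zmodType) (f : cpx -> cpx -> B) ch : alt_biadd f ->
  wedge_eval f (nu_sigma_chain ch) = \sum_(q <- bd ch) phiw f q.2 *~ q.1.
Proof.
  move=> Hf. elim: ch => [|[k [[[v0 v1] v2] v3]] ch IH].
  - by rewrite /wedge_eval /= !big_nil.
  - have -> : nu_sigma_chain ((k, (v0, v1, v2, v3)) :: ch) =
      wscale k (nu (sigma_hat v0 v1 v2 v3)) ++ nu_sigma_chain ch by [].
    have -> : bd ((k, (v0, v1, v2, v3)) :: ch) =
      map (fun q => ((k * q.1)%R, q.2)) (faces (v0, v1, v2, v3)) ++ bd ch by [].
    rewrite wcatE IH big_cat; congr (_ + _).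
    rewrite wscaleE (part1 v0 v1 v2 v3 Hf) /mu_bd !wcatE !wscaleE.
    rewrite !big_cons big_nil /= !(mulrC k) !mulrzA.
    by rewrite !mulrzDl ?mul0rz addr0.
Qed.

Theorem mainTheorem1 :
  (forall v0 v1 v2 v3 : CV, gen4 v0 v1 v2 v3 ->
     weq (nu (sigma_hat v0 v1 v2 v3)) (mu_bd v0 v1 v2 v3)) /\
  (forall ch : chain3, (forall p, List.In p ch -> gen4t p.2) ->
     zero_coinv (bd ch) ->
     weq (nu_sigma_chain ch) [::]).
Proof.
  split.
  - move=> v0 v1 v2 v3 _. exact: part1.
  - move=> ch _ Hz B f Hf. rewrite (chainE ch Hf).
    have -> : wedge_eval f [::] = 0 by rewrite /wedge_eval big_nil.
    apply: (Hz B (phiw f)).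
    move=> [[v0 v1] v2] [[w0 w1] w2] [a [b [c [d [H [H0 H1 H2]]]]]].
    rewrite /phiw /mu /wedge_eval.
    rewrite (cc_inv a b c d v0 v1 w0 w1 H H0 H1) (cc_inv a b c d v0 v2 w0 w2 H H0 H2)
            (cc_inv a b c d v1 v2 w1 w2 H H1 H2).
    reflexivity.
Qed.
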